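(* For any integer $m\ge1$ there exist $\varepsilon>0$ small enough and $b\in\mathbb{R}$ such that, on $I(m,\varepsilon)$, $N(f_2+bf_3)=1$, where $f_2,f_3$ are the second and third eigenfunctions of the Laplacian.
   Context: $I(m,\varepsilon)$ is the metric graph with vertices $v_1,v_2,v_3,v_4$, an edge $e_1$ of length $1/2$ from $v_1$ to $v_2$, an edge $e_2$ of length $1/2$ from $v_3$ to $v_4$, and $m$ parallel edges of length $\varepsilon$ joining $v_2$ and $v_3$. The Laplacian $-\frac{d^2}{dx^2}$ acts edgewise with Dirichlet conditions at $v_1,v_4$ and Neumann–Kirchhoff conditions (continuity and vanishing sum of outgoing derivatives) at $v_2,v_3$; eigenvalues are ordered increasingly with multiplicity, with $L^2$-orthogonal eigenfunctions $f_1,f_2,\dots$. $N(f)$ is the number of zeroes of $f$ other than at $v_1,v_4$. *)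

(* Defs.v *)
From Stdlib Require Import Reals Lra.
From Coquelicot Require Import Coquelicot.
Open Scope R_scope.

Fixpoint sumR (n : nat) (F : nat -> R) : R :=
  match n with
  | O => 0
  | S k => sumR k F + F k
  end.

(* A real function on the metric graph I(m,eps):
   - ge1 : edge e1, parametrised by x in [0,1/2], x = 0 at v1, x = 1/2 at v2;
   - ge2 : edge e2, parametrised by x in [0,1/2], x = 0 at v3, x = 1/2 at v4;
   - gp j : j-th parallel edge (j < m), parametrised by x in [0,eps],
            x = 0 at v2, x = eps at v3.
   Only the values on these intervals are meaningful. *)
Record gfun := mkGfun {
  ge1 : R -> R;
  ge2 : R -> R;
  gp  : nat -> R -> R
}.

Definition gadd (f g : gfun) : gfun :=
  mkGfun (fun x => ge1 f x + ge1 g x) (fun x => ge2 f x + ge2 g x)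
         (fun j x => gp f j x + gp g j x).

Definition gscale (c : R) (f : gfun) : gfun :=
  mkGfun (fun x => c * ge1 f x) (fun x => c * ge2 f x) (fun j x => c * gp f j x).

Definition gcomb (n : nat) (c : nat -> R) (f : nat -> gfun) : gfun :=
  mkGfun (fun x => sumR n (fun k => c k * ge1 (f k) x))
         (fun x => sumR n (fun k => c k * ge2 (f k) x))
         (fun j x => sumR n (fun k => c k * gp (f k) j x)).

Definition geq_on (m : nat) (eps : R) (f g : gfun) : Prop :=
  (forall x, 0 <= x <= 1/2 -> ge1 f x = ge1 g x) /\
  (forall x, 0 <= x <= 1/2 -> ge2 f x = ge2 g x) /\
  (forall j x, (j < m)%nat -> 0 <= x <= eps -> gp f j x = gp g j x).

Definition gip (m : nat) (eps : R) (f g : gfun) : R :=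
  RInt (fun x => ge1 f x * ge1 g x) 0 (1/2) +
  RInt (fun x => ge2 f x * ge2 g x) 0 (1/2) +
  sumR m (fun j => RInt (fun x => gp f j x * gp g j x) 0 eps).

(* A C^2 solution on a closed interval extends
   uniquely to a solution on all of R, so we identify the edge function with
   that extension (this makes the endpoint derivatives ordinary derivatives). *)
Definition edge_eq (lam : R) (u : R -> R) : Prop :=
  forall x, ex_derive u x /\ is_derive (Derive u) x (- lam * u x).

(* f is an eigenfunction of the Laplacian on I(m,eps) with eigenvalue lam:
   edgewise equation, Dirichlet at v1 and v4, continuity and Kirchhoff
   (sum of outgoing derivatives = 0) at v2 and v3, and f nonzero. *)
Definition is_eigenfunction (m : nat) (eps lam : R) (f : gfun) : Prop :=
  edge_eq lam (ge1 f) /\ edge_eq lam (ge2 f) /\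
  (forall j, (j < m)%nat -> edge_eq lam (gp f j)) /\
  ge1 f 0 = 0 /\ ge2 f (1/2) = 0 /\
  (forall j, (j < m)%nat -> gp f j 0 = ge1 f (1/2)) /\
  (forall j, (j < m)%nat -> gp f j eps = ge2 f 0) /\
  (* Kirchhoff at v2: outgoing derivative along e1 is -ge1', along p_j is +p_j'(0) *)
  - Derive (ge1 f) (1/2) + sumR m (fun j => Derive (gp f j) 0) = 0 /\
  (* Kirchhoff at v3: outgoing along e2 is +ge2'(0), along p_j is -p_j'(eps) *)
  Derive (ge2 f) 0 - sumR m (fun j => Derive (gp f j) eps) = 0 /\
  ~ geq_on m eps f (mkGfun (fun _ => 0) (fun _ => 0) (fun _ _ => 0)).

(* Index shift: lam k, f k are the paper's lambda_{k+1}, f_{k+1}.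
   Completeness: every eigenfunction is a finite linear combination of the f k,
   which (with orthogonality and monotonicity) forces every eigenvalue to
   appear exactly with its multiplicity. *)
Definition is_eigenbasis (m : nat) (eps : R) (lam : nat -> R) (f : nat -> gfun) : Prop :=
  (forall k, is_eigenfunction m eps (lam k) (f k)) /\
  (forall k l, (k <= l)%nat -> lam k <= lam l) /\
  (forall k l, k <> l -> gip m eps (f k) (f l) = 0) /\
  (forall mu g, is_eigenfunction m eps mu g ->
     exists (n : nat) (c : nat -> R), geq_on m eps g (gcomb n c f)).

(* Points of I(m,eps) other than v1 and v4, each represented exactly once. *)
Inductive gpoint :=
  | PtE1 (x : R)
  | PtE2 (x : R)
  | PtP (j : nat) (x : R)
  | PtV2
  | PtV3.

Definition valid_point (m : nat) (eps : R) (p : gpoint) : Prop :=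
  match p with
  | PtE1 x => 0 < x < 1/2
  | PtE2 x => 0 < x < 1/2
  | PtP j x => (j < m)%nat /\ 0 < x < eps
  | PtV2 => True
  | PtV3 => True
  end.

Definition geval (f : gfun) (p : gpoint) : R :=
  match p with
  | PtE1 x => ge1 f x
  | PtE2 x => ge2 f x
  | PtP j x => gp f j x
  | PtV2 => ge1 f (1/2)
  | PtV3 => ge2 f 0
  end.

Definition N_is_one (m : nat) (eps : R) (f : gfun) : Prop :=
  exists! p, valid_point m eps p /\ geval f p = 0.

(* Main.v *)
Require Import Defs.
From Stdlib Require Import Reals Lra Lia.
From Coquelicot Require Import Coquelicot.
Open Scope R_scope.

Lemma isd_eq (f : R -> R) (x l l' : R) : is_derive f x l -> l = l' -> is_derive f x l'.
Proof. intros H ->; exact H. Qed.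

Lemma isd_mult (f g : R -> R) (x a b : R) : is_derive f x a -> is_derive g x b ->
  is_derive (fun t => f t * g t) x (a * g x + f x * b).
Proof. intros Hf Hg. apply (is_derive_mult f g x a b Hf Hg). intros; apply Rmult_comm. Qed.

Lemma isd_plus (f g : R -> R) (x a b : R) : is_derive f x a -> is_derive g x b ->
  is_derive (fun t => f t + g t) x (a + b).
Proof. intros Hf Hg. apply (is_derive_plus f g x a b Hf Hg). Qed.

Lemma isd_minus (f g : R -> R) (x a b : R) : is_derive f x a -> is_derive g x b ->
  is_derive (fun t => f t - g t) x (a - b).
Proof. intros Hf Hg. apply (is_derive_minus f g x a b Hf Hg). Qed.

Lemma isd_scal (f : R -> R) (x k a : R) : is_derive f x a -> is_derive (fun t => k * f t) x (k * a).
Proof. apply is_derive_scal. Qed.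

Lemma const_of_deriv0 (F : R -> R) : (forall x, is_derive F x 0) -> forall x y, F x = F y.
Proof.
  intros H x y.
  destruct (MVT_gen F x y (fun _ => 0)) as [c [_ Hc]].
  - intros; apply H.
  - intros z _. apply derivable_continuous_pt. apply ex_derive_Reals_0.
    eexists; apply H.
  - lra.
Qed.

Lemma ode_zero (lam : R) (w w' : R -> R) : 0 <= lam ->
  (forall x, is_derive w x (w' x)) -> (forall x, is_derive w' x (- lam * w x)) ->
  w 0 = 0 -> w' 0 = 0 -> forall x, w x = 0.
Proof.
  intros Hl Hw Hw' H0 H0' x.
  assert (HE : forall y, w' y * w' y + lam * (w y * w y) = 0).
  { intro y. set (E := fun t => w' t * w' t + lam * (w t * w t)).
    change (E y = 0). replace 0 with (E 0) by (unfold E; rewrite H0, H0'; ring).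
    apply const_of_deriv0. intro t. unfold E.
    eapply isd_eq. apply isd_plus. apply isd_mult; apply Hw'.
    apply isd_scal. apply isd_mult; apply Hw. ring. }
  destruct (Rle_lt_or_eq_dec 0 lam Hl) as [Hp|Hz].
  - specialize (HE x). assert (w x * w x = 0) by nra. nra.
  - subst lam. assert (Hd : forall y, w' y = 0). { intro y. specialize (HE y). nra. }
    rewrite <- H0. apply const_of_deriv0. intro t. rewrite <- (Hd t). apply Hw.
Qed.

Lemma ode_pos (k : R) (u : R -> R) : 0 < k -> edge_eq (k * k) u ->
  forall x, u x = u 0 * cos (k * x) + Derive u 0 / k * sin (k * x).
Proof.
  intros Hk Hu x.
  set (w := fun t => u t - (u 0 * cos (k * t) + Derive u 0 / k * sin (k * t))).
  set (w' := fun t => Derive u t - (u 0 * (- k * sin (k * t)) + Derive u 0 * cos (k * t))).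
  assert (Hz : forall t, w t = 0).
  { apply (ode_zero (k*k) w w'). nra.
    - intro t. unfold w, w'. apply isd_minus. destruct (Hu t) as [[l Hl] _].
      rewrite (is_derive_unique _ _ _ Hl). exact Hl.
      auto_derive; auto. field. lra.
    - intro t. unfold w, w'. eapply isd_eq. apply isd_minus. apply Hu.
      auto_derive; auto. field. lra.
    - unfold w. rewrite Rmult_0_r, cos_0, sin_0. ring.
    - unfold w'. rewrite Rmult_0_r, cos_0, sin_0. ring. }
  specialize (Hz x). unfold w in Hz. lra.
Qed.

Lemma ode_null (u : R -> R) : edge_eq 0 u -> forall x, u x = u 0 + Derive u 0 * x.
Proof.
  intros Hu x.
  set (w := fun t => u t - (u 0 + Derive u 0 * t)).
  set (w' := fun t => Derive u t - Derive u 0).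
  assert (Hz : forall t, w t = 0).
  { apply (ode_zero 0 w w'). lra.
    - intro t. unfold w, w'. apply isd_minus. destruct (Hu t) as [[l Hl] _].
      rewrite (is_derive_unique _ _ _ Hl). exact Hl.
      auto_derive; auto. ring.
    - intro t. unfold w, w'. eapply isd_eq. apply isd_minus. apply Hu.
      apply is_derive_const. unfold zero; simpl. ring.
    - unfold w. ring.
    - unfold w'. ring. }
  specialize (Hz x). unfold w in Hz. lra.
Qed.

Lemma cmult (f g : R -> R) x : continuous f x -> continuous g x -> continuous (fun y => f y * g y) x.
Proof. intros; apply (continuous_mult f g); auto. Qed.
Lemma cplus (f g : R -> R) x : continuous f x -> continuous g x -> continuous (fun y => f y + g y) x.
Proof. intros; apply (continuous_plus f g); auto. Qed.
Lemma cscal (f : R -> R) c x : continuous f x -> continuous (fun y => c * f y) x.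
Proof. intros; apply (continuous_mult (fun _ => c) f); auto. apply continuous_const. Qed.

Lemma exRInt_cont (f : R -> R) a b : (forall z, Rmin a b <= z <= Rmax a b -> continuous f z) -> ex_RInt f a b.
Proof. intros H. apply (ex_RInt_continuous (V:=R_CompleteNormedModule)); auto. Qed.

Definition smooth (p : R -> R) := (forall x, ex_derive p x) /\ (forall x, continuous (Derive p) x).

Lemma edge_smooth lam p : edge_eq lam p -> smooth p.
Proof.
  intros H; split; intro x. apply H.
  apply (ex_derive_continuous (K:=R_AbsRing) (Derive p)). eexists; apply H.
Qed.

Lemma smooth_cont p x : smooth p -> continuous p x.
Proof. intros [H _]; apply (ex_derive_continuous (K:=R_AbsRing) p), H. Qed.

Lemma exRInt_prod p q a b : smooth p -> smooth q -> ex_RInt (fun x => p x * q x) a b.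
Proof. intros Hp Hq. apply exRInt_cont. intros; apply cmult; apply smooth_cont; auto. Qed.

Lemma exRInt_dprod p q a b : smooth p -> smooth q -> ex_RInt (fun x => Derive p x * Derive q x) a b.
Proof. intros Hp Hq. apply exRInt_cont. intros; apply cmult; [apply Hp|apply Hq]. Qed.

Lemma edge_int (p q : R -> R) lam a b : smooth p -> edge_eq lam q ->
  RInt (fun x => Derive p x * Derive q x) a b - lam * RInt (fun x => p x * q x) a b
  = p b * Derive q b - p a * Derive q a.
Proof.
  intros Hp Hq.
  assert (Hs := edge_smooth _ _ Hq).
  assert (HI : is_RInt (fun x => Derive p x * Derive q x + p x * (- lam * q x)) a b
                 (p b * Derive q b - p a * Derive q a)).
  { apply (is_RInt_derive (V:=R_CompleteNormedModule) (fun x => p x * Derive q x)).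
    - intros x _. apply isd_mult. destruct Hp as [H _]. destruct (H x) as [l Hl].
      rewrite (is_derive_unique _ _ _ Hl); exact Hl. apply Hq.
    - intros x _. apply cplus. apply cmult; [apply Hp|apply Hs].
      apply cmult. apply smooth_cont; auto. apply cscal, smooth_cont; auto. }
  apply (is_RInt_unique (V:=R_CompleteNormedModule)) in HI. rewrite <- HI.
  rewrite (RInt_plus (V:=R_CompleteNormedModule) (fun x => Derive p x * Derive q x) (fun x => p x * (- lam * q x))).
  2: apply exRInt_dprod; auto.
  2: { apply exRInt_cont. intros; apply cmult. apply smooth_cont; auto. apply cscal, smooth_cont; auto. }
  rewrite (RInt_ext (V:=R_CompleteNormedModule) (fun x => p x * (- lam * q x)) (fun x => scal (- lam) (p x * q x))).
  2: { intros; unfold scal; simpl; unfold mult; simpl; ring. }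
  rewrite (RInt_scal (V:=R_CompleteNormedModule)). 2: apply exRInt_prod; auto.
  unfold scal, plus; simpl; unfold mult; simpl. ring.
Qed.

Lemma sumR_ext n F G : (forall k, (k < n)%nat -> F k = G k) -> sumR n F = sumR n G.
Proof. induction n; simpl; intros H; auto. rewrite IHn, H; auto; intros; apply H; lia. Qed.
Lemma sumR_plus n F G : sumR n (fun k => F k + G k) = sumR n F + sumR n G.
Proof. induction n; simpl; [ring|rewrite IHn; ring]. Qed.
Lemma sumR_minus n F G : sumR n (fun k => F k - G k) = sumR n F - sumR n G.
Proof. induction n; simpl; [ring|rewrite IHn; ring]. Qed.
Lemma sumR_scal n c F : sumR n (fun k => c * F k) = c * sumR n F.
Proof. induction n; simpl; [ring|rewrite IHn; ring]. Qed.
Lemma sumR_const n c : sumR n (fun _ => c) = INR n * c.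
Proof. induction n; simpl sumR; [simpl; ring|rewrite IHn, S_INR; ring]. Qed.
Lemma sumR_nonneg n F : (forall k, (k < n)%nat -> 0 <= F k) -> 0 <= sumR n F.
Proof. induction n; simpl; intros H; [lra|]. assert (0 <= F n) by (apply H; lia).
  assert (0 <= sumR n F) by (apply IHn; intros; apply H; lia). lra. Qed.
Lemma sumR_zero n F : (forall k, (k < n)%nat -> F k = 0) -> sumR n F = 0.
Proof. intros H; rewrite (sumR_ext n F (fun _ => 0)); auto. rewrite sumR_const; ring. Qed.
Lemma sumR_single n F j : (j < n)%nat -> (forall k, (k < n)%nat -> k <> j -> F k = 0) -> sumR n F = F j.
Proof.
  induction n; intros Hj H; [lia|]. simpl.
  destruct (Nat.eq_dec j n) as [->|Hne].
  - rewrite sumR_zero; [ring|]. intros k Hk; apply H; lia.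
  - rewrite IHn; [| lia | intros; apply H; lia]. rewrite (H n); [ring|lia|auto].
Qed.
Lemma sumR_swap n m (F : nat -> nat -> R) :
  sumR n (fun k => sumR m (fun j => F k j)) = sumR m (fun j => sumR n (fun k => F k j)).
Proof.
  induction n; simpl. rewrite sumR_zero; auto.
  rewrite IHn, <- sumR_plus. reflexivity.
Qed.
Lemma sumR_pos n F j : (j < n)%nat -> (forall k, (k < n)%nat -> 0 <= F k) -> 0 < F j -> 0 < sumR n F.
Proof.
  induction n; intros Hj H Hp; [lia|]. simpl.
  destruct (Nat.eq_dec j n) as [->|Hne].
  - assert (0 <= sumR n F) by (apply sumR_nonneg; intros; apply H; lia). lra.
  - assert (0 < sumR n F) by (apply IHn; auto; try lia; intros; apply H; lia).
    assert (0 <= F n) by (apply H; lia). lra.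
Qed.

Lemma RInt_extR (f g : R -> R) a b : (forall x, Rmin a b < x < Rmax a b -> f x = g x) -> RInt f a b = RInt g a b.
Proof. apply (RInt_ext (V:=R_CompleteNormedModule)). Qed.

Definition Qint (m : nat) (eps : R) (u v : gfun) : R :=
  RInt (fun x => Derive (ge1 u) x * Derive (ge1 v) x) 0 (1/2) +
  RInt (fun x => Derive (ge2 u) x * Derive (ge2 v) x) 0 (1/2) +
  sumR m (fun j => RInt (fun x => Derive (gp u j) x * Derive (gp v j) x) 0 eps).

Lemma green m eps lu lv u v : is_eigenfunction m eps lu u -> is_eigenfunction m eps lv v ->
  Qint m eps u v - lv * gip m eps u v = 0.
Proof.
  intros Hu Hv.
  destruct Hu as (Hu1 & Hu2 & Hup & Hd1 & Hd2 & Hc2 & Hc3 & _ & _ & _).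
  destruct Hv as (Hv1 & Hv2 & Hvp & _ & _ & _ & _ & Hk2 & Hk3 & _).
  unfold Qint, gip.
  replace (RInt (fun x => Derive (ge1 u) x * Derive (ge1 v) x) 0 (1 / 2) +
   RInt (fun x => Derive (ge2 u) x * Derive (ge2 v) x) 0 (1 / 2) +
   sumR m (fun j => RInt (fun x => Derive (gp u j) x * Derive (gp v j) x) 0 eps) -
   lv * (RInt (fun x => ge1 u x * ge1 v x) 0 (1 / 2) + RInt (fun x => ge2 u x * ge2 v x) 0 (1 / 2) +
     sumR m (fun j => RInt (fun x => gp u j x * gp v j x) 0 eps)))
  with ((RInt (fun x => Derive (ge1 u) x * Derive (ge1 v) x) 0 (1 / 2) - lv * RInt (fun x => ge1 u x * ge1 v x) 0 (1 / 2)) +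
        (RInt (fun x => Derive (ge2 u) x * Derive (ge2 v) x) 0 (1 / 2) - lv * RInt (fun x => ge2 u x * ge2 v x) 0 (1 / 2)) +
        sumR m (fun j => RInt (fun x => Derive (gp u j) x * Derive (gp v j) x) 0 eps - lv * RInt (fun x => gp u j x * gp v j x) 0 eps))
    by (rewrite sumR_minus, sumR_scal; ring).
  rewrite (edge_int _ _ lv _ _ (edge_smooth _ _ Hu1) Hv1).
  rewrite (edge_int _ _ lv _ _ (edge_smooth _ _ Hu2) Hv2).
  rewrite (sumR_ext m _ (fun j => ge2 u 0 * Derive (gp v j) eps - ge1 u (1/2) * Derive (gp v j) 0)).
  2: { intros j Hj. rewrite (edge_int _ _ lv _ _ (edge_smooth _ _ (Hup j Hj)) (Hvp j Hj)).
       rewrite Hc2, Hc3; auto. }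
  rewrite sumR_minus, !sumR_scal. rewrite Hd1, Hd2.
  assert (E1 : Derive (ge1 v) (1/2) = sumR m (fun j => Derive (gp v j) 0)) by lra.
  assert (E2 : Derive (ge2 v) 0 = sumR m (fun j => Derive (gp v j) eps)) by lra.
  rewrite E1, E2. ring.
Qed.

Lemma Qint_sym m eps u v : Qint m eps u v = Qint m eps v u.
Proof.
  unfold Qint. f_equal; [f_equal|].
  apply RInt_extR; intros; ring. apply RInt_extR; intros; ring.
  apply sumR_ext; intros; apply RInt_extR; intros; ring.
Qed.

Lemma gip_sym m eps u v : gip m eps u v = gip m eps v u.
Proof.
  unfold gip. f_equal; [f_equal|].
  apply RInt_extR; intros; ring. apply RInt_extR; intros; ring.
  apply sumR_ext; intros; apply RInt_extR; intros; ring.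
Qed.

Lemma ortho m eps lu lv u v : is_eigenfunction m eps lu u -> is_eigenfunction m eps lv v ->
  lu <> lv -> gip m eps u v = 0.
Proof.
  intros Hu Hv Hne.
  pose proof (green _ _ _ _ _ _ Hu Hv) as G1.
  pose proof (green _ _ _ _ _ _ Hv Hu) as G2.
  rewrite Qint_sym, gip_sym in G2.
  assert ((lu - lv) * gip m eps u v = 0) by lra.
  apply Rmult_integral in H. destruct H; auto. lra.
Qed.

Lemma int_sq_nonneg (g : R -> R) a b : a <= b -> (forall x, continuous g x) ->
  0 <= RInt (fun x => g x * g x) a b.
Proof.
  intros Hab Hg. apply RInt_ge_0; auto.
  apply exRInt_cont; intros; apply cmult; auto.
  intros; nra.
Qed.

Lemma int_sq_pos (g : R -> R) a b x0 : a < b -> a <= x0 <= b -> (forall x, continuous g x) ->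
  g x0 <> 0 -> 0 < RInt (fun x => g x * g x) a b.
Proof.
  intros Hab Hx0 Hg Hne.
  set (h := fun x => g x * g x).
  assert (Hh : forall x, continuous h x) by (intros; apply cmult; auto).
  assert (Hpos : 0 < h x0) by (unfold h; assert (g x0 * g x0 > 0) by (apply Rsqr_pos_lt; auto); lra).
  assert (Hc : continuity_pt h x0) by (apply continuity_pt_filterlim; apply Hh).
  destruct (Hc (h x0 / 2)) as [d [Hd Hdd]]. lra.
  set (c := Rmax a (x0 - d/2)). set (e := Rmin b (x0 + d/2)).
  assert (Hce : a <= c /\ c < e /\ e <= b /\ c <= x0 <= e).
  { unfold c, e, Rmax, Rmin. destruct (Rle_dec a (x0 - d/2)); destruct (Rle_dec b (x0 + d/2)); lra. }
  assert (Hin : forall x, c <= x <= e -> h x0 / 2 < h x).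
  { intros x Hx. destruct (Req_dec x x0) as [->|Hxx]. lra. assert (R_dist (h x) (h x0) < h x0 / 2).
    { apply Hdd. split. { split. exact I. auto. } simpl. unfold R_dist.
      assert (x0 - d/2 <= x <= x0 + d/2).
      { unfold c, e, Rmax, Rmin in *. destruct (Rle_dec a (x0 - d/2)); destruct (Rle_dec b (x0 + d/2)); lra. }
      unfold Rabs; destruct (Rcase_abs (x - x0)); lra. }
    unfold R_dist, Rabs in H. destruct (Rcase_abs (h x - h x0)); lra. }
  assert (Hex : forall p q, ex_RInt h p q) by (intros; apply exRInt_cont; intros; apply Hh).
  change (0 < RInt h a b).
  rewrite <- (RInt_Chasles (V:=R_CompleteNormedModule) h a c b); auto.
  rewrite <- (RInt_Chasles (V:=R_CompleteNormedModule) h c e b); auto.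
  assert (0 <= RInt h a c) by (apply int_sq_nonneg; tauto).
  assert (0 <= RInt h e b) by (apply int_sq_nonneg; tauto).
  assert (0 < RInt h c e).
  { apply RInt_gt_0. tauto. intros x Hx. assert (h x0 / 2 < h x) by (apply Hin; lra). lra.
    intros; apply Hh. }
  unfold plus; simpl. lra.
Qed.

Lemma eig_smooth m eps lam u : is_eigenfunction m eps lam u ->
  smooth (ge1 u) /\ smooth (ge2 u) /\ (forall j, (j < m)%nat -> smooth (gp u j)).
Proof.
  intros (H1 & H2 & Hp & _). split; [|split].
  eapply edge_smooth; eauto. eapply edge_smooth; eauto.
  intros j Hj; eapply edge_smooth; eauto.
Qed.

Lemma gip_pos m eps lam u : 0 < eps -> is_eigenfunction m eps lam u -> 0 < gip m eps u u.
Proof.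
  intros He Hu. destruct (eig_smooth _ _ _ _ Hu) as (S1 & S2 & Sp).
  assert (N1 : 0 <= RInt (fun x => ge1 u x * ge1 u x) 0 (1/2))
    by (apply int_sq_nonneg; [lra| intros; apply smooth_cont; auto]).
  assert (N2 : 0 <= RInt (fun x => ge2 u x * ge2 u x) 0 (1/2))
    by (apply int_sq_nonneg; [lra| intros; apply smooth_cont; auto]).
  assert (Np : 0 <= sumR m (fun j => RInt (fun x => gp u j x * gp u j x) 0 eps))
    by (apply sumR_nonneg; intros; apply int_sq_nonneg; [lra| intros; apply smooth_cont; auto]).
  unfold gip.
  destruct Hu as (_ & _ & _ & _ & _ & _ & _ & _ & _ & Hnz).
  destruct (Classical_Prop.classic (forall x, 0 <= x <= 1/2 -> ge1 u x = 0)) as [Z1|Z1].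
  2: { apply Classical_Pred_Type.not_all_ex_not in Z1. destruct Z1 as [x Hx].
       apply Classical_Prop.imply_to_and in Hx. destruct Hx as [Hx Hne].
       assert (0 < RInt (fun x => ge1 u x * ge1 u x) 0 (1/2)).
       { apply (int_sq_pos _ _ _ x); auto; try lra. intros; apply smooth_cont; auto. }
       lra. }
  destruct (Classical_Prop.classic (forall x, 0 <= x <= 1/2 -> ge2 u x = 0)) as [Z2|Z2].
  2: { apply Classical_Pred_Type.not_all_ex_not in Z2. destruct Z2 as [x Hx].
       apply Classical_Prop.imply_to_and in Hx. destruct Hx as [Hx Hne].
       assert (0 < RInt (fun x => ge2 u x * ge2 u x) 0 (1/2)).
       { apply (int_sq_pos _ _ _ x); auto; try lra. intros; apply smooth_cont; auto. }
       lra. }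
  destruct (Classical_Prop.classic (forall j x, (j < m)%nat -> 0 <= x <= eps -> gp u j x = 0)) as [Z3|Z3].
  { exfalso; apply Hnz. split; [|split]; simpl; auto. }
  apply Classical_Pred_Type.not_all_ex_not in Z3. destruct Z3 as [j Hj].
  apply Classical_Pred_Type.not_all_ex_not in Hj. destruct Hj as [x Hx].
  apply Classical_Prop.imply_to_and in Hx. destruct Hx as [Hjm Hx].
  apply Classical_Prop.imply_to_and in Hx. destruct Hx as [Hx Hne].
  assert (0 < sumR m (fun j => RInt (fun x => gp u j x * gp u j x) 0 eps)).
  { apply (sumR_pos _ _ j); auto.
    intros; apply int_sq_nonneg; [lra| intros; apply smooth_cont; auto].
    apply (int_sq_pos _ _ _ x); auto. intros; apply smooth_cont; auto. }
  lra.
Qed.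

Lemma eig_nonneg m eps lam u : 0 < eps -> is_eigenfunction m eps lam u -> 0 <= lam.
Proof.
  intros He Hu.
  pose proof (gip_pos _ _ _ _ He Hu) as Hp.
  pose proof (green _ _ _ _ _ _ Hu Hu) as G.
  destruct (eig_smooth _ _ _ _ Hu) as (S1 & S2 & Sp).
  assert (0 <= Qint m eps u u).
  { unfold Qint.
    assert (0 <= RInt (fun x => Derive (ge1 u) x * Derive (ge1 u) x) 0 (1/2))
      by (apply int_sq_nonneg; [lra| intros; apply S1]).
    assert (0 <= RInt (fun x => Derive (ge2 u) x * Derive (ge2 u) x) 0 (1/2))
      by (apply int_sq_nonneg; [lra| intros; apply S2]).
    assert (0 <= sumR m (fun j => RInt (fun x => Derive (gp u j) x * Derive (gp u j) x) 0 eps))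
      by (apply sumR_nonneg; intros; apply int_sq_nonneg; [lra| intros; apply Sp; auto]).
    lra. }
  destruct (Rle_dec 0 lam); auto. nra.
Qed.

Lemma RInt_sum_lin n (c : nat -> R) (p : nat -> R -> R) (q : R -> R) a b :
  (forall k, (k < n)%nat -> smooth (p k)) -> smooth q ->
  RInt (fun x => sumR n (fun k => c k * p k x) * q x) a b =
  sumR n (fun k => c k * RInt (fun x => p k x * q x) a b).
Proof.
  induction n; intros Hp Hq; simpl.
  - rewrite (RInt_extR _ (fun _ => 0)). 2: intros; ring.
    rewrite RInt_const. unfold scal; simpl; unfold mult; simpl; ring.
  - rewrite (RInt_extR _ (fun x => plus (sumR n (fun k => c k * p k x) * q x) (scal (c n) (p n x * q x)))).
    2: intros; unfold plus, scal; simpl; unfold mult; simpl; ring.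
    rewrite (RInt_plus (V:=R_CompleteNormedModule)).
    + rewrite (RInt_scal (V:=R_CompleteNormedModule)).
      * rewrite IHn. unfold plus, scal; simpl; unfold mult; simpl; ring.
        intros; apply Hp; lia. auto.
      * apply exRInt_prod; auto.
    + apply exRInt_cont. intros z _. apply cmult. 2: apply smooth_cont; auto.
      clear IHn. induction n; simpl. apply continuous_const.
      apply cplus. apply IHn; intros; apply Hp; lia. apply cscal, smooth_cont; auto.
    + apply (ex_RInt_scal (V:=R_CompleteNormedModule)). apply exRInt_prod; auto.
Qed.

Lemma gip_comb m eps n c f h lamf lamh : (forall k, is_eigenfunction m eps (lamf k) (f k)) ->
  is_eigenfunction m eps lamh h ->
  gip m eps (gcomb n c f) h = sumR n (fun k => c k * gip m eps (f k) h).
Proof.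
  intros Hf Hh. destruct (eig_smooth _ _ _ _ Hh) as (T1 & T2 & Tp).
  assert (S1 : forall k, smooth (ge1 (f k))) by (intro k; exact (proj1 (eig_smooth _ _ _ _ (Hf k)))).
  assert (S2 : forall k, smooth (ge2 (f k))) by (intro k; exact (proj1 (proj2 (eig_smooth _ _ _ _ (Hf k))))).
  assert (Sp : forall k j, (j < m)%nat -> smooth (gp (f k) j)) by (intro k; exact (proj2 (proj2 (eig_smooth _ _ _ _ (Hf k))))).
  unfold gip, gcomb; simpl.
  rewrite (RInt_sum_lin n c (fun k => ge1 (f k)) (ge1 h)); auto.
  rewrite (RInt_sum_lin n c (fun k => ge2 (f k)) (ge2 h)); auto.
  rewrite (sumR_ext m _ (fun j => sumR n (fun k => c k * RInt (fun x => gp (f k) j x * gp h j x) 0 eps))).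
  2: { intros j Hj. apply (RInt_sum_lin n c (fun k => gp (f k) j) (gp h j)); auto. }
  rewrite sumR_swap.
  rewrite (sumR_ext n (fun k => c k * (RInt (fun x => ge1 (f k) x * ge1 h x) 0 (1 / 2) +
     RInt (fun x => ge2 (f k) x * ge2 h x) 0 (1 / 2) +
     sumR m (fun j => RInt (fun x => gp (f k) j x * gp h j x) 0 eps)))
    (fun k => (c k * RInt (fun x => ge1 (f k) x * ge1 h x) 0 (1 / 2) +
     c k * RInt (fun x => ge2 (f k) x * ge2 h x) 0 (1 / 2)) +
     sumR m (fun j => c k * RInt (fun x => gp (f k) j x * gp h j x) 0 eps))).
  2: { intros; rewrite sumR_scal; ring. }
  rewrite !sumR_plus. reflexivity.
Qed.

Lemma Rmin_0h : Rmin 0 (1/2) = 0. Proof. unfold Rmin; destruct (Rle_dec 0 (1/2)); lra. Qed.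
Lemma Rmax_0h : Rmax 0 (1/2) = 1/2. Proof. unfold Rmax; destruct (Rle_dec 0 (1/2)); lra. Qed.

Lemma gip_geq m eps g g' h : 0 <= eps -> geq_on m eps g g' -> gip m eps g h = gip m eps g' h.
Proof.
  intros He (E1 & E2 & Ep). unfold gip.
  f_equal; [f_equal|].
  - apply RInt_extR; intros x; rewrite Rmin_0h, Rmax_0h; intros; rewrite E1; auto; lra.
  - apply RInt_extR; intros x; rewrite Rmin_0h, Rmax_0h; intros; rewrite E2; auto; lra.
  - apply sumR_ext; intros j Hj. apply RInt_extR. intros x.
    rewrite Rmin_left, Rmax_right by lra. intros; rewrite Ep; auto; lra.
Qed.

Lemma appears m eps lam f mu g : 0 < eps -> is_eigenbasis m eps lam f ->
  is_eigenfunction m eps mu g -> exists j, lam j = mu.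
Proof.
  intros He (Hf & Hmono & Horth & Hcomp) Hg.
  destruct (Classical_Prop.classic (exists j, lam j = mu)) as [?|Hno]; auto. exfalso.
  destruct (Hcomp mu g Hg) as [n [c Hc]].
  assert (Hz : forall j, (j < n)%nat -> c j = 0).
  { intros j Hj.
    assert (G0 : gip m eps g (f j) = 0).
    { apply (ortho m eps mu (lam j)); auto. intro E; apply Hno; eauto. }
    rewrite (gip_geq _ _ _ _ _ (Rlt_le _ _ He) Hc) in G0.
    rewrite (gip_comb m eps n c f (f j) lam (lam j)) in G0; auto.
    rewrite (sumR_single n _ j) in G0; auto.
    2: { intros k Hk Hkj. rewrite (Horth k j); auto; ring. }
    pose proof (gip_pos _ _ _ _ He (Hf j)). 
    apply Rmult_integral in G0; destruct G0; auto; lra. }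
  destruct Hg as (_ & _ & _ & _ & _ & _ & _ & _ & _ & Hnz). apply Hnz.
  destruct Hc as (E1 & E2 & Ep). simpl in *.
  split; [|split].
  - intros x Hx. rewrite E1; auto. apply sumR_zero. intros k Hk; rewrite Hz; auto; ring.
  - intros x Hx. rewrite E2; auto. apply sumR_zero. intros k Hk; rewrite Hz; auto; ring.
  - intros j x Hj Hx. rewrite Ep; auto. apply sumR_zero. intros k Hk; rewrite Hz; auto; ring.
Qed.

Lemma edge_eq_ext lam (u v : R -> R) : (forall x, u x = v x) -> edge_eq lam u -> edge_eq lam v.
Proof.
  intros E H x. destruct (H x) as [H1 H2]. split.
  - apply (ex_derive_ext u v); auto.
  - rewrite <- E. apply (is_derive_ext (Derive u) (Derive v)); auto.
    intro t; apply Derive_ext; auto.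
Qed.

Lemma sinus_der A B k x :
  is_derive (fun x => A * cos (k*x) + B * sin (k*x)) x (- A * k * sin (k*x) + B * k * cos (k*x)).
Proof. auto_derive; auto. ring. Qed.

Lemma sinus_Derive A B k x :
  Derive (fun x => A * cos (k*x) + B * sin (k*x)) x = - A * k * sin (k*x) + B * k * cos (k*x).
Proof. apply is_derive_unique, sinus_der. Qed.

Lemma sinus_edge A B k : edge_eq (k*k) (fun x => A * cos (k*x) + B * sin (k*x)).
Proof.
  intro x. split. eexists; apply sinus_der.
  apply (is_derive_ext (fun x => - A * k * sin (k*x) + B * k * cos (k*x))).
  intro t; rewrite sinus_Derive; auto.
  eapply isd_eq. auto_derive; auto. ring.
Qed.

Lemma Derive_rep (u : R -> R) A B k : (forall x, u x = A * cos (k*x) + B * sin (k*x)) ->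
  forall x, Derive u x = - A * k * sin (k*x) + B * k * cos (k*x).
Proof. intros E x. rewrite (Derive_ext u _ x E). apply sinus_Derive. Qed.

Definition Fa (m : nat) (eps k : R) : R :=
  INR m * sin (k/2) * cos (k*eps/2) + sin (k*eps/2) * cos (k/2).
Definition Fs (m : nat) (eps k : R) : R :=
  cos (k/2) * cos (k*eps/2) - INR m * sin (k*eps/2) * sin (k/2).

Definition Ganti (eps k : R) : gfun :=
  mkGfun (fun x => sin (k*x)) (fun x => - sin (k*(1/2 - x)))
         (fun _ x => - (sin (k/2) / sin (k*eps/2)) * sin (k*(x - eps/2))).
Definition Gsym (eps k : R) : gfun :=
  mkGfun (fun x => sin (k*x)) (fun x => sin (k*(1/2 - x)))
         (fun _ x => (sin (k/2) / cos (k*eps/2)) * cos (k*(x - eps/2))).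

Definition prop_eq (m : nat) (u : gfun) (a : R) (G : gfun) : Prop :=
  (forall x, ge1 u x = a * ge1 G x) /\ (forall x, ge2 u x = a * ge2 G x) /\
  (forall j x, (j < m)%nat -> gp u j x = a * gp G j x).

Lemma alg_key M a s c sa ca Q V Rr : 0 < M -> sa*sa + ca*ca = 1 -> M*Q = a*c ->
  V = a*s*(ca*ca - sa*sa) + Q*(2*sa*ca) -> Rr = M*(-(a*s)*(2*sa*ca) + Q*(ca*ca - sa*sa)) ->
  V*c + Rr*s = 0 -> a * ((M*s*ca + sa*c) * (c*ca - M*sa*s)) = 0.
Proof.
  intros HM Hp HQ HV HR HD.
  assert (E : M*(V*c + Rr*s) = (M*Q - a*c)*((2*sa*ca)*c + M*(ca*ca - sa*sa)*s)
     + 2 * a * ((M*s*ca + sa*c) * (c*ca - M*sa*s))) by (rewrite HV, HR; ring).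
  rewrite HD, HQ in E. assert (a * ((M*s*ca + sa*c) * (c*ca - M*sa*s)) * 2 = 0) by lra. lra.
Qed.

Lemma alg_anti M a s c sa ca Q V Rr : 0 < M -> sa <> 0 -> sa*sa + ca*ca = 1 -> M*Q = a*c ->
  V = a*s*(ca*ca - sa*sa) + Q*(2*sa*ca) -> Rr = M*(-(a*s)*(2*sa*ca) + Q*(ca*ca - sa*sa)) ->
  M*s*ca + sa*c = 0 -> V = -(a*s) /\ Rr = a*c /\ Q = -(a*s*ca/sa).
Proof.
  intros HM Hs Hp HQ HV HR HF.
  assert (E1 : M*(a*s*ca + Q*sa) = a*(M*s*ca + sa*c) + sa*(M*Q - a*c)) by ring.
  rewrite HF, HQ in E1. assert (E1' : a*s*ca + Q*sa = 0).
  { assert (M*(a*s*ca + Q*sa) = 0) by lra. apply Rmult_integral in H; destruct H; lra. }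
  assert (E2 : V + a*s*(sa*sa+ca*ca) = 2*ca*(a*s*ca + Q*sa)) by (rewrite HV; ring).
  assert (E3 : Rr - a*c*(sa*sa+ca*ca) = -2*a*sa*(M*s*ca + sa*c) + (M*Q - a*c)*(ca*ca - sa*sa)) by (rewrite HR; ring).
  rewrite Hp, E1' in E2. rewrite Hp, HF, HQ in E3.
  split; [lra|split; [lra|]]. field_simplify_eq; auto. lra.
Qed.

Lemma alg_sym M a s c sa ca Q V Rr : 0 < M -> ca <> 0 -> sa*sa + ca*ca = 1 -> M*Q = a*c ->
  V = a*s*(ca*ca - sa*sa) + Q*(2*sa*ca) -> Rr = M*(-(a*s)*(2*sa*ca) + Q*(ca*ca - sa*sa)) ->
  c*ca - M*sa*s = 0 -> V = a*s /\ Rr = -(a*c) /\ Q = a*s*sa/ca.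
Proof.
  intros HM Hs Hp HQ HV HR HF.
  assert (E1 : M*(Q*ca - a*s*sa) = a*(c*ca - M*sa*s) + ca*(M*Q - a*c)) by ring.
  rewrite HF, HQ in E1. assert (E1' : Q*ca - a*s*sa = 0).
  { assert (M*(Q*ca - a*s*sa) = 0) by lra. apply Rmult_integral in H; destruct H; lra. }
  assert (E2 : V - a*s*(sa*sa+ca*ca) = 2*sa*(Q*ca - a*s*sa)) by (rewrite HV; ring).
  assert (E3 : Rr + a*c*(sa*sa+ca*ca) = 2*a*ca*(c*ca - M*sa*s) + (M*Q - a*c)*(ca*ca - sa*sa)) by (rewrite HR; ring).
  rewrite Hp, E1' in E2. rewrite Hp, HF, HQ in E3.
  split; [lra|split; [lra|]]. field_simplify_eq; auto. lra.
Qed.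

Lemma INR_m_ge1 m : (1 <= m)%nat -> 1 <= INR m.
Proof. intros H. apply (le_INR 1 m) in H. simpl in H. lra. Qed.

Lemma classify m eps lam u : (1 <= m)%nat -> 0 < eps -> 0 < lam -> sqrt lam * eps < PI ->
  is_eigenfunction m eps lam u ->
  exists a, a <> 0 /\ ((Fa m eps (sqrt lam) = 0 /\ prop_eq m u a (Ganti eps (sqrt lam))) \/
                        (Fs m eps (sqrt lam) = 0 /\ prop_eq m u a (Gsym eps (sqrt lam)))).
Proof.
  intros Hm He Hl Hke Hu.
  assert (Hk : 0 < sqrt lam) by (apply sqrt_lt_R0; auto).
  assert (Hkk : sqrt lam * sqrt lam = lam) by (apply sqrt_sqrt; lra).
  unfold Fa, Fs, Ganti, Gsym, prop_eq; simpl.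
  generalize dependent (sqrt lam). intros k Hke Hk Hkk. subst lam.
  destruct Hu as (H1 & H2 & Hp & D1 & D2 & C2 & C3 & K2 & K3 & Hnz).
  pose proof (INR_m_ge1 m Hm) as HM. set (M := INR m) in *.
  assert (Hal : 0 < k*eps/2 < PI/2) by (split; [apply Rmult_lt_0_compat; [nra|lra] | lra]).
  set (al := k*eps/2) in *.
  assert (Hsa : 0 < sin al) by (apply sin_gt_0; lra).
  assert (Hca : 0 < cos al) by (apply cos_gt_0; lra).
  assert (Hpy : sin al * sin al + cos al * cos al = 1) by (pose proof (sin2_cos2 al); unfold Rsqr in *; lra).
  assert (Hke2 : k * eps = 2 * al) by (unfold al; field).
  assert (HS : sin (k*eps) = 2 * sin al * cos al) by (rewrite Hke2; apply sin_2a).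
  assert (HC : cos (k*eps) = cos al * cos al - sin al * sin al) by (rewrite Hke2; apply cos_2a).
  assert (HSp : 0 < sin (k*eps)) by (rewrite HS; nra).
  set (a := Derive (ge1 u) 0 / k).
  assert (R1 : forall x, ge1 u x = 0 * cos (k*x) + a * sin (k*x)).
  { intro x. rewrite (ode_pos k (ge1 u) Hk H1 x), D1. unfold a. ring. }
  set (s := sin (k/2)). set (c := cos (k/2)).
  assert (Hh : k * (1/2) = k/2) by field.
  set (U := ge1 u (1/2)).
  assert (HU : U = a * s) by (unfold U, s; rewrite R1, Hh; ring).
  assert (Rp : forall j, (j < m)%nat -> forall x, gp u j x = U * cos (k*x) + (Derive (gp u j) 0 / k) * sin (k*x)).
  { intros j Hj x. rewrite (ode_pos k (gp u j) Hk (Hp j Hj) x), C2; auto. }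
  set (V := ge2 u 0).
  set (Rr := Derive (ge2 u) 0 / k).
  assert (R2 : forall x, ge2 u x = V * cos (k*x) + Rr * sin (k*x)).
  { intro x. rewrite (ode_pos k (ge2 u) Hk H2 x). reflexivity. }
  set (Q := (V - U * cos (k*eps)) / sin (k*eps)).
  assert (HQ : forall j, (j < m)%nat -> Derive (gp u j) 0 / k = Q).
  { intros j Hj. pose proof (C3 j Hj) as E. rewrite Rp in E; auto. fold V in E.
    unfold Q. rewrite <- E. field. lra. }
  assert (HV : V = U * cos (k*eps) + Q * sin (k*eps)) by (unfold Q; field; lra).
  assert (Dd1 : Derive (ge1 u) (1/2) = a * k * c).
  { rewrite (Derive_rep _ _ _ _ R1), Hh. unfold c. ring. }
  assert (Ddp0 : forall j, (j < m)%nat -> Derive (gp u j) 0 = k * Q).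
  { intros j Hj. rewrite <- (HQ j Hj). field. lra. }
  assert (Ddpe : forall j, (j < m)%nat -> Derive (gp u j) eps = - U * k * sin (k*eps) + Q * k * cos (k*eps)).
  { intros j Hj. rewrite (Derive_rep _ _ _ _ (Rp j Hj)), HQ; auto. }
  rewrite Dd1, (sumR_ext m _ (fun _ => k * Q) Ddp0), sumR_const in K2. fold M in K2.
  assert (HMQ : M * Q = a * c).
  { assert (k * (M * Q - a * c) = 0) by lra. apply Rmult_integral in H. destruct H; lra. }
  rewrite (sumR_ext m _ (fun _ => - U * k * sin (k*eps) + Q * k * cos (k*eps)) Ddpe), sumR_const in K3.
  fold M in K3.
  assert (HRr : Rr = M * (- U * sin (k*eps) + Q * cos (k*eps))).
  { unfold Rr. assert (Derive (ge2 u) 0 = M * (- U * k * sin (k * eps) + Q * k * cos (k * eps))) by lra.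
    rewrite H. field. lra. }
  assert (HD : V * c + Rr * s = 0).
  { rewrite R2, Hh in D2. exact D2. }
  rewrite HS, HC, HU in HV. rewrite HS, HC, HU in HRr.
  assert (HMp : 0 < M) by lra.
  pose proof (alg_key M a s c (sin al) (cos al) Q V Rr HMp Hpy HMQ HV) as Key.
  assert (HRr' : Rr = M * (- (a * s) * (2 * sin al * cos al) + Q * (cos al * cos al - sin al * sin al))) by (rewrite HRr; ring).
  specialize (Key HRr' HD).
  assert (Ha : a <> 0).
  { intro Ha0. apply Hnz. rewrite Ha0 in HU, HMQ, HV, HRr'.
    assert (HQ0 : Q = 0). { assert (M * Q = 0) by lra. apply Rmult_integral in H; destruct H; lra. }
    rewrite HQ0 in HV, HRr'.
    split; [|split]; simpl.
    - intros x _. rewrite R1, Ha0. ring.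
    - intros x _. rewrite R2, HV, HRr'. ring.
    - intros j x Hj _. rewrite Rp, HQ, HU, HQ0; auto. ring. }
  exists a. split; auto.
  apply Rmult_integral in Key. destruct Key as [Key|Key]; [contradiction|].
  apply Rmult_integral in Key. destruct Key as [Key|Key].
  - left. split. lra.
    destruct (alg_anti M a s c (sin al) (cos al) Q V Rr HMp (Rgt_not_eq _ _ Hsa) Hpy HMQ HV HRr' Key)
      as (EV & ER & EQ).
    split; [|split].
    + intro x. rewrite R1. ring.
    + intro x. rewrite R2, EV, ER. replace (k * (1/2 - x)) with (k/2 - k*x) by field.
      rewrite sin_minus. fold s c. ring.
    + intros j x Hj. rewrite Rp, HQ, EQ, HU; auto.
      replace (k * (x - eps/2)) with (k*x - al) by (unfold al; field).
      rewrite sin_minus. fold s. field. lra.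
  - right. split. lra.
    destruct (alg_sym M a s c (sin al) (cos al) Q V Rr HMp (Rgt_not_eq _ _ Hca) Hpy HMQ HV HRr' Key)
      as (EV & ER & EQ).
    split; [|split].
    + intro x. rewrite R1. ring.
    + intro x. rewrite R2, EV, ER. replace (k * (1/2 - x)) with (k/2 - k*x) by field.
      rewrite sin_minus. fold s c. ring.
    + intros j x Hj. rewrite Rp, HQ, EQ, HU; auto.
      replace (k * (x - eps/2)) with (k*x - al) by (unfold al; field).
      rewrite cos_minus. fold s. field. lra.
Qed.

Lemma Derive_lin (u : R -> R) A B : (forall x, u x = A + B * x) -> forall x, Derive u x = B.
Proof. intros E x. rewrite (Derive_ext u _ x E). apply is_derive_unique. auto_derive; auto; ring. Qed.

Lemma no_zero m eps u : (1 <= m)%nat -> 0 < eps -> ~ is_eigenfunction m eps 0 u.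
Proof.
  intros Hm He Hu.
  destruct Hu as (H1 & H2 & Hp & D1 & D2 & C2 & C3 & K2 & K3 & Hnz).
  pose proof (INR_m_ge1 m Hm) as HM. set (M := INR m) in *.
  set (a := Derive (ge1 u) 0).
  assert (R1 : forall x, ge1 u x = 0 + a * x) by (intro x; rewrite (ode_null _ H1 x), D1; reflexivity).
  set (U := ge1 u (1/2)). assert (HU : U = a/2) by (unfold U; rewrite R1; field).
  assert (Rp : forall j, (j < m)%nat -> forall x, gp u j x = U + Derive (gp u j) 0 * x).
  { intros j Hj x. rewrite (ode_null _ (Hp j Hj) x), C2; auto. }
  set (V := ge2 u 0). set (r := Derive (ge2 u) 0).
  assert (R2 : forall x, ge2 u x = V + r * x) by (intro x; rewrite (ode_null _ H2 x); reflexivity).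
  set (q := (V - U) / eps).
  assert (Hq : forall j, (j < m)%nat -> Derive (gp u j) 0 = q).
  { intros j Hj. pose proof (C3 j Hj) as E. rewrite Rp in E; auto. fold V in E. unfold q. rewrite <- E. field. lra. }
  assert (Hq' : forall j, (j < m)%nat -> Derive (gp u j) eps = q).
  { intros j Hj. rewrite (Derive_lin _ _ _ (Rp j Hj)). auto. }
  rewrite (Derive_lin _ _ _ R1), (sumR_ext m _ (fun _ => q) Hq), sumR_const in K2. fold M in K2.
  rewrite (sumR_ext m _ (fun _ => q) Hq'), sumR_const in K3. fold M in K3. fold r in K3.
  rewrite R2 in D2.
  assert (HV : V = U + q * eps) by (unfold q; field; lra).
  assert (Hq0 : q = 0).
  { assert (q * (M + eps) = 0) by nra. apply Rmult_integral in H; destruct H; lra. }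
  apply Hnz. split; [|split]; simpl.
  - intros x _. rewrite R1. assert (a = 0) by nra. rewrite H; ring.
  - intros x _. rewrite R2. assert (r = 0) by nra. assert (V = 0) by nra. rewrite H, H0; ring.
  - intros j x Hj _. rewrite Rp, Hq; auto. rewrite Hq0, HU. assert (a = 0) by nra. rewrite H; field.
Qed.

Lemma eig_pos m eps lam u : (1 <= m)%nat -> 0 < eps -> is_eigenfunction m eps lam u -> 0 < lam.
Proof.
  intros Hm He Hu. destruct (Rle_lt_or_eq_dec 0 lam (eig_nonneg _ _ _ _ He Hu)) as [?|E]; auto.
  subst. exfalso. eapply no_zero; eauto.
Qed.

Lemma G_eig_common eps k : 0 < k -> k <= 3 * PI -> 0 < eps -> k * eps < PI ->
  0 < sin (k*eps/2) /\ 0 < cos (k*eps/2) /\ 0 < sin (k * (1/4)).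
Proof.
  intros Hk Hk3 He Hke.
  assert (0 < k*eps/2 < PI/2) by (split; [apply Rmult_lt_0_compat; [nra|lra] | lra]).
  split; [apply sin_gt_0; lra|split; [apply cos_gt_0; lra|]].
  apply sin_gt_0. nra. pose proof PI_RGT_0. nra.
Qed.

Lemma Ganti_eig m eps k : (1 <= m)%nat -> 0 < k -> k <= 3 * PI -> 0 < eps -> k * eps < PI ->
  Fa m eps k = 0 -> is_eigenfunction m eps (k*k) (Ganti eps k).
Proof.
  intros Hm Hk Hk3 He Hke HF.
  destruct (G_eig_common eps k Hk Hk3 He Hke) as (Hsa & Hca & H14).
  unfold Fa in HF. set (M := INR m) in *. set (al := k*eps/2) in *.
  set (s := sin (k/2)) in *. set (c := cos (k/2)) in *.
  assert (E1 : forall x, sin (k*x) = 0 * cos (k*x) + 1 * sin (k*x)) by (intro; ring).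
  assert (E2 : forall x, - sin (k*(1/2 - x)) = (- s) * cos (k*x) + c * sin (k*x)).
  { intro x. replace (k*(1/2 - x)) with (k/2 - k*x) by field. rewrite sin_minus. fold s c. ring. }
  assert (Ep : forall x, - (s / sin al) * sin (k*(x - eps/2)) = s * cos (k*x) + (- (s * cos al / sin al)) * sin (k*x)).
  { intro x. replace (k*(x - eps/2)) with (k*x - al) by (unfold al; field). rewrite sin_minus. field. lra. }
  unfold is_eigenfunction, Ganti; simpl.
  split; [|split; [|split; [|split; [|split; [|split; [|split; [|split; [|split]]]]]]]].
  - apply (edge_eq_ext _ (fun x => 0 * cos (k*x) + 1 * sin (k*x))). intro; symmetry; apply E1. apply sinus_edge.
  - apply (edge_eq_ext _ (fun x => (- s) * cos (k*x) + c * sin (k*x))). intro; symmetry; apply E2. apply sinus_edge.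
  - intros j _. apply (edge_eq_ext _ (fun x => s * cos (k*x) + (- (s * cos al / sin al)) * sin (k*x))).
    intro; symmetry; apply Ep. apply sinus_edge.
  - rewrite Rmult_0_r; apply sin_0.
  - replace (k * (1/2 - 1/2)) with 0 by ring. rewrite sin_0; ring.
  - intros j _. rewrite Ep, Rmult_0_r, cos_0, sin_0. replace (k*(1/2)) with (k/2) by field. fold s; ring.
  - intros j _. rewrite Ep, E2, Rmult_0_r, cos_0, sin_0.
    replace (k*eps) with (2*al) by (unfold al; field). rewrite cos_2a, sin_2a.
    assert (Hp : sin al * sin al + cos al * cos al = 1) by (pose proof (sin2_cos2 al); unfold Rsqr in *; lra).
    transitivity (- s * (sin al * sin al + cos al * cos al)). field. lra. rewrite Hp. ring.
  - rewrite (Derive_rep _ _ _ _ E1). rewrite (sumR_ext m _ (fun _ => s * k * cos al / sin al * (-1)))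
      by (intros; rewrite (Derive_rep _ _ _ _ Ep), Rmult_0_r, sin_0, cos_0; field; lra).
    rewrite sumR_const. fold M. replace (k*(1/2)) with (k/2) by field. fold c.
    apply (Rmult_eq_reg_l (sin al)); [|lra].
    replace (sin al * (- (- 0 * k * sin (k / 2) + 1 * k * c) + M * (s * k * cos al / sin al * -1))) with
      (- k * (M * s * cos al + sin al * c)) by (field; lra).
    rewrite HF; ring.
  - rewrite (Derive_rep _ _ _ _ E2). rewrite (sumR_ext m _ (fun _ => - s * k * sin (k*eps) + (- (s * cos al / sin al)) * k * cos (k*eps)))
      by (intros; rewrite (Derive_rep _ _ _ _ Ep); auto).
    rewrite sumR_const. fold M. rewrite Rmult_0_r, sin_0, cos_0.
    replace (k*eps) with (2*al) by (unfold al; field). rewrite cos_2a, sin_2a.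
    apply (Rmult_eq_reg_l (sin al)); [|lra].
    assert (Hp : sin al * sin al + cos al * cos al = 1) by (pose proof (sin2_cos2 al); unfold Rsqr in *; lra).
    replace (sin al * (- - s * k * 0 + c * k * 1 - M * (- s * k * (2 * sin al * cos al) + - (s * cos al / sin al) * k * (cos al * cos al - sin al * sin al))))
      with (k * (sin al * c + M * s * cos al * (sin al * sin al + cos al * cos al))) by (field; lra).
    rewrite Hp. rewrite Rmult_1_r. replace (sin al * c + M * s * cos al) with (M * s * cos al + sin al * c) by ring.
    rewrite HF; ring.
  - intros (Z1 & _). specialize (Z1 (1/4)). simpl in Z1. assert (0 <= 1/4 <= 1/2) by lra.
    specialize (Z1 H). lra.
Qed.

Lemma Gsym_eig m eps k : (1 <= m)%nat -> 0 < k -> k <= 3 * PI -> 0 < eps -> k * eps < PI ->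
  Fs m eps k = 0 -> is_eigenfunction m eps (k*k) (Gsym eps k).
Proof.
  intros Hm Hk Hk3 He Hke HF.
  destruct (G_eig_common eps k Hk Hk3 He Hke) as (Hsa & Hca & H14).
  unfold Fs in HF. set (M := INR m) in *. set (al := k*eps/2) in *.
  set (s := sin (k/2)) in *. set (c := cos (k/2)) in *.
  assert (E1 : forall x, sin (k*x) = 0 * cos (k*x) + 1 * sin (k*x)) by (intro; ring).
  assert (E2 : forall x, sin (k*(1/2 - x)) = s * cos (k*x) + (- c) * sin (k*x)).
  { intro x. replace (k*(1/2 - x)) with (k/2 - k*x) by field. rewrite sin_minus. fold s c. ring. }
  assert (Ep : forall x, (s / cos al) * cos (k*(x - eps/2)) = s * cos (k*x) + (s * sin al / cos al) * sin (k*x)).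
  { intro x. replace (k*(x - eps/2)) with (k*x - al) by (unfold al; field). rewrite cos_minus. field. lra. }
  unfold is_eigenfunction, Gsym; simpl.
  split; [|split; [|split; [|split; [|split; [|split; [|split; [|split; [|split]]]]]]]].
  - apply (edge_eq_ext _ (fun x => 0 * cos (k*x) + 1 * sin (k*x))). intro; symmetry; apply E1. apply sinus_edge.
  - apply (edge_eq_ext _ (fun x => s * cos (k*x) + (- c) * sin (k*x))). intro; symmetry; apply E2. apply sinus_edge.
  - intros j _. apply (edge_eq_ext _ (fun x => s * cos (k*x) + (s * sin al / cos al) * sin (k*x))).
    intro; symmetry; apply Ep. apply sinus_edge.
  - rewrite Rmult_0_r; apply sin_0.
  - replace (k * (1/2 - 1/2)) with 0 by ring. rewrite sin_0; ring.
  - intros j _. rewrite Ep, Rmult_0_r, cos_0, sin_0. replace (k*(1/2)) with (k/2) by field. fold s; ring.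
  - intros j _. rewrite Ep, E2, Rmult_0_r, cos_0, sin_0.
    replace (k*eps) with (2*al) by (unfold al; field). rewrite cos_2a, sin_2a.
    assert (Hp : sin al * sin al + cos al * cos al = 1) by (pose proof (sin2_cos2 al); unfold Rsqr in *; lra).
    apply (Rmult_eq_reg_l (cos al)); [|lra].
    replace (cos al * (s * (cos al * cos al - sin al * sin al) + s * sin al / cos al * (2 * sin al * cos al)))
      with (s * cos al * (sin al * sin al + cos al * cos al)) by (field; lra).
    rewrite Hp; ring.
  - rewrite (Derive_rep _ _ _ _ E1). rewrite (sumR_ext m _ (fun _ => s * sin al / cos al * k))
      by (intros; rewrite (Derive_rep _ _ _ _ Ep), Rmult_0_r, sin_0, cos_0; field; lra).
    rewrite sumR_const. fold M. replace (k*(1/2)) with (k/2) by field. fold c.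
    apply (Rmult_eq_reg_l (cos al)); [|lra].
    replace (cos al * (- (- 0 * k * sin (k / 2) + 1 * k * c) + M * (s * sin al / cos al * k))) with
      (- k * (c * cos al - M * sin al * s)) by (field; lra).
    rewrite HF; ring.
  - rewrite (Derive_rep _ _ _ _ E2). rewrite (sumR_ext m _ (fun _ => - s * k * sin (k*eps) + (s * sin al / cos al) * k * cos (k*eps)))
      by (intros; rewrite (Derive_rep _ _ _ _ Ep); auto).
    rewrite sumR_const. fold M. rewrite Rmult_0_r, sin_0, cos_0.
    replace (k*eps) with (2*al) by (unfold al; field). rewrite cos_2a, sin_2a.
    apply (Rmult_eq_reg_l (cos al)); [|lra].
    assert (Hp : sin al * sin al + cos al * cos al = 1) by (pose proof (sin2_cos2 al); unfold Rsqr in *; lra).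
    replace (cos al * (- s * k * 0 + - c * k * 1 - M * (- s * k * (2 * sin al * cos al) + s * sin al / cos al * k * (cos al * cos al - sin al * sin al))))
      with (- k * (c * cos al - M * sin al * s * (sin al * sin al + cos al * cos al))) by (field; lra).
    rewrite Hp, Rmult_1_r, HF; ring.
  - intros (Z1 & _). specialize (Z1 (1/4)). simpl in Z1. assert (0 <= 1/4 <= 1/2) by lra.
    specialize (Z1 H). lra.
Qed.

Section Roots.
Variable m : nat.
Variable eps : R.
Hypothesis Hm : (1 <= m)%nat.
Hypothesis He : 0 < eps.
Hypothesis HMe : INR m * eps <= 1/100.

Lemma HM1 : 1 <= INR m. Proof. apply INR_m_ge1; auto. Qed.
Lemma eps_small : eps <= 1/100.
Proof. pose proof HM1. nra. Qed.

Lemma al_props k : 0 <= k <= 3 * PI ->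
  0 <= k*eps/2 /\ k*eps/2 < PI/4 /\ INR m * (k*eps/2) <= 3*PI/200.
Proof.
  intros Hk. pose proof PI_RGT_0. pose proof eps_small. pose proof HM1.
  split; [|split].
  - assert (0 <= k*eps) by nra. lra.
  - assert (k*eps <= 3*PI*(1/100)) by nra. lra.
  - assert (INR m * (k*eps/2) = k * (INR m * eps) / 2) by field. rewrite H2.
    assert (k * (INR m * eps) <= 3*PI*(1/100)) by nra. lra.
Qed.

Lemma al_mono k k' : 0 <= k -> k < k' -> k' <= 3 * PI ->
  sin (k*eps/2) < sin (k'*eps/2) /\ cos (k'*eps/2) < cos (k*eps/2) /\
  0 <= sin (k*eps/2) /\ 0 < cos (k'*eps/2).
Proof.
  intros H0 H1 H2. pose proof PI_RGT_0.
  destruct (al_props k) as (A0 & A1 & _). lra.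
  destruct (al_props k') as (B0 & B1 & _). lra.
  assert (k*eps/2 < k'*eps/2) by (apply Rmult_lt_compat_r; [lra|]; nra).
  split; [|split; [|split]].
  - apply sin_increasing_1; lra.
  - apply cos_decreasing_1; lra.
  - apply sin_ge_0; lra.
  - apply cos_gt_0; lra.
Qed.

Lemma al_pos k : 0 < k <= 3 * PI -> 0 < sin (k*eps/2) /\ 0 < cos (k*eps/2) /\ sin (k*eps/2) < cos (k*eps/2).
Proof.
  intros Hk. pose proof PI_RGT_0.
  destruct (al_props k) as (A0 & A1 & _). lra.
  assert (0 < k*eps/2) by (assert (0 < k*eps) by nra; lra).
  split; [apply sin_gt_0; lra|split; [apply cos_gt_0; lra|]].
  apply Rlt_le_trans with (sin (PI/4)). apply sin_increasing_1; lra.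
  rewrite sin_cos_PI4. left. apply cos_decreasing_1; lra.
Qed.

Lemma Fs_dec1 k k' : 0 <= k -> k < k' -> k' <= PI -> Fs m eps k' < Fs m eps k.
Proof.
  intros H0 H1 H2. pose proof PI_RGT_0. pose proof HM1.
  destruct (al_mono k k' H0 H1) as (S1 & C1 & S0 & C0). lra.
  unfold Fs. set (M := INR m) in *.
  assert (X1 : cos (k'/2) < cos (k/2)) by (apply cos_decreasing_1; lra).
  assert (X2 : 0 <= cos (k'/2)) by (apply cos_ge_0; lra).
  assert (X3 : sin (k/2) <= sin (k'/2)) by (apply sin_incr_1; lra).
  assert (X4 : 0 <= sin (k/2)) by (apply sin_ge_0; lra).
  assert (cos (k'/2) * cos (k'*eps/2) < cos (k/2) * cos (k*eps/2)).
  { apply Rle_lt_trans with (cos (k'/2) * cos (k*eps/2)). apply Rmult_le_compat_l; lra.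
    apply Rmult_lt_compat_r; lra. }
  assert (M * sin (k*eps/2) * sin (k/2) <= M * sin (k'*eps/2) * sin (k'/2)).
  { apply Rmult_le_compat. nra. lra. apply Rmult_le_compat_l; lra. lra. }
  lra.
Qed.

Lemma Fs_neg2 k : PI <= k -> k <= 2 * PI -> Fs m eps k < 0.
Proof.
  intros H0 H1. pose proof PI_RGT_0. pose proof HM1.
  destruct (al_pos k) as (Sa & Ca & _). lra.
  unfold Fs. set (M := INR m) in *.
  assert (X1 : cos (k/2) <= 0) by (apply cos_le_0; lra).
  assert (X2 : 0 <= sin (k/2)) by (apply sin_ge_0; lra).
  destruct (Req_dec (k/2) (PI/2)) as [E|E].
  - rewrite E, cos_PI2, sin_PI2. nra.
  - assert (cos (k/2) < 0) by (apply cos_lt_0; lra).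
    assert (cos (k/2) * cos (k*eps/2) < 0) by nra.
    assert (0 <= M * sin (k*eps/2) * sin (k/2)) by (apply Rmult_le_pos; [nra|lra]). lra.
Qed.

Lemma Fs_inc3 k k' : 2 * PI <= k -> k < k' -> k' <= 3 * PI -> Fs m eps k < Fs m eps k'.
Proof.
  intros H0 H1 H2. pose proof PI_RGT_0. pose proof HM1.
  destruct (al_mono k k') as (S1 & C1 & S0 & C0); try lra.
  unfold Fs. set (M := INR m) in *.
  assert (X1 : cos (k/2) < cos (k'/2)) by (apply cos_increasing_1; lra).
  assert (X2 : cos (k'/2) <= 0) by (apply cos_le_0; lra).
  assert (X3 : sin (k'/2) < sin (k/2)) by (apply sin_decreasing_1; lra).
  assert (X4 : sin (k/2) <= 0) by (apply sin_le_0; lra).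
  assert (cos (k/2) * cos (k*eps/2) < cos (k'/2) * cos (k'*eps/2)).
  { apply Rle_lt_trans with (cos (k/2) * cos (k'*eps/2)). nra. nra. }
  assert (M * sin (k*eps/2) * (- sin (k/2)) <= M * sin (k'*eps/2) * (- sin (k'/2))).
  { apply Rmult_le_compat. nra. lra. apply Rmult_le_compat_l; lra. lra. }
  lra.
Qed.

Lemma Fa_pos1 k : 0 < k -> k <= PI -> 0 < Fa m eps k.
Proof.
  intros H0 H1. pose proof PI_RGT_0. pose proof HM1.
  destruct (al_pos k) as (Sa & Ca & _). lra.
  unfold Fa. set (M := INR m) in *.
  assert (0 < sin (k/2)) by (apply sin_gt_0; lra).
  assert (0 <= cos (k/2)) by (apply cos_ge_0; lra).
  assert (0 < M * sin (k/2) * cos (k*eps/2)) by (apply Rmult_lt_0_compat; [nra|lra]).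
  nra.
Qed.

Lemma Fa_dec2 k k' : PI <= k -> k < k' -> k' <= 2 * PI -> Fa m eps k' < Fa m eps k.
Proof.
  intros H0 H1 H2. pose proof PI_RGT_0. pose proof HM1.
  destruct (al_mono k k') as (S1 & C1 & S0 & C0); try lra.
  unfold Fa. set (M := INR m) in *.
  assert (X1 : cos (k'/2) < cos (k/2)) by (apply cos_decreasing_1; lra).
  assert (X2 : cos (k/2) <= 0) by (apply cos_le_0; lra).
  assert (X3 : sin (k'/2) < sin (k/2)) by (apply sin_decreasing_1; lra).
  assert (X4 : 0 <= sin (k'/2)) by (apply sin_ge_0; lra).
  assert (M * sin (k'/2) * cos (k'*eps/2) < M * sin (k/2) * cos (k*eps/2)).
  { rewrite !Rmult_assoc. apply Rmult_lt_compat_l. lra.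
    apply Rle_lt_trans with (sin (k'/2) * cos (k*eps/2)). apply Rmult_le_compat_l; lra.
    apply Rmult_lt_compat_r. apply Rlt_trans with (cos (k'*eps/2)); lra. lra. }
  assert (sin (k'*eps/2) * cos (k'/2) <= sin (k*eps/2) * cos (k/2)).
  { apply Rle_trans with (sin (k'*eps/2) * cos (k/2)).
    apply Rmult_le_compat_l; lra. nra. }
  lra.
Qed.

Lemma Fa_neg3 k : 2 * PI <= k -> k <= 3 * PI -> Fa m eps k < 0.
Proof.
  intros H0 H1. pose proof PI_RGT_0. pose proof HM1.
  destruct (al_pos k) as (Sa & Ca & _). lra.
  unfold Fa. set (M := INR m) in *.
  assert (X1 : cos (k/2) <= 0) by (apply cos_le_0; lra).
  assert (X2 : sin (k/2) <= 0) by (apply sin_le_0; lra).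
  destruct (Req_dec (k/2) PI) as [E|E].
  - rewrite E, cos_PI, sin_PI. nra.
  - assert (sin (k/2) < 0) by (apply sin_lt_0; lra).
    assert (M * sin (k/2) * cos (k*eps/2) < 0).
    { assert (M * sin (k/2) < 0) by nra. nra. }
    nra.
Qed.

Lemma Fs_3PI : 0 < Fs m eps (3 * PI).
Proof.
  pose proof PI_RGT_0. pose proof HM1. destruct (al_pos (3*PI)) as (Sa & Ca & _). lra.
  unfold Fs. replace (3 * PI / 2) with (3 * (PI/2)) by field. rewrite cos_3PI2, sin_3PI2. nra.
Qed.

Lemma Fs_0 : 0 < Fs m eps 0.
Proof. unfold Fs. replace (0/2) with 0 by field. replace (0*eps/2) with 0 by field.
  rewrite cos_0, sin_0. lra. Qed.

Lemma Fa_3PI2 : 0 < Fa m eps (3 * PI / 2).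
Proof.
  pose proof PI_RGT_0. pose proof HM1. destruct (al_pos (3*PI/2)) as (Sa & Ca & Lt). lra.
  unfold Fa. replace (3 * PI / 2 / 2) with (PI - PI/4) by field.
  rewrite sin_PI_x, Rtrigo_facts.cos_pi_minus, <- sin_cos_PI4.
  assert (0 < sin (PI/4)) by (apply sin_gt_0; lra).
  assert (INR m * cos (3 * PI / 2 * eps / 2) >= cos (3 * PI / 2 * eps / 2)) by nra.
  assert (0 < sin (PI/4) * (INR m * cos (3 * PI / 2 * eps / 2) - sin (3 * PI / 2 * eps / 2))) by (apply Rmult_lt_0_compat; lra).
  nra.
Qed.

Lemma cont_Fs : continuity (Fs m eps).
Proof. intro x. apply derivable_continuous_pt, ex_derive_Reals_0. unfold Fs. auto_derive; auto. Qed.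
Lemma cont_Fa : continuity (Fa m eps).
Proof. intro x. apply derivable_continuous_pt, ex_derive_Reals_0. unfold Fa. auto_derive; auto. Qed.

Lemma spectrum : exists k1 k2 k3,
  0 < k1 < PI /\ 3 * PI / 2 < k2 < 2 * PI /\ 2 * PI < k3 < 3 * PI /\
  Fs m eps k1 = 0 /\ Fa m eps k2 = 0 /\ Fs m eps k3 = 0 /\
  (forall k, 0 < k <= 3 * PI -> Fa m eps k = 0 -> k = k2) /\
  (forall k, 0 < k <= 3 * PI -> Fs m eps k = 0 -> k = k1 \/ k = k3).
Proof.
  pose proof PI_RGT_0.
  destruct (IVT (fun k => - Fs m eps k) 0 PI) as [k1 [Hk1 E1]].
  { intro x. apply continuity_pt_opp, cont_Fs. } lra.
  { pose proof Fs_0; lra. } { pose proof (Fs_neg2 PI); lra. }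
  destruct (IVT (fun k => - Fa m eps k) (3*PI/2) (2*PI)) as [k2 [Hk2 E2]].
  { intro x. apply continuity_pt_opp, cont_Fa. } lra.
  { pose proof Fa_3PI2; lra. } { pose proof (Fa_neg3 (2*PI)); lra. }
  destruct (IVT (Fs m eps) (2*PI) (3*PI)) as [k3 [Hk3 E3]].
  { apply cont_Fs. } lra.
  { pose proof (Fs_neg2 (2*PI)); lra. } { pose proof Fs_3PI; lra. }
  simpl in E1, E2.
  assert (k1 <> 0) by (intro; subst; pose proof Fs_0; lra).
  assert (k1 <> PI) by (intro; subst; pose proof (Fs_neg2 PI); lra).
  assert (k2 <> 2*PI) by (intro; subst; pose proof (Fa_neg3 (2*PI)); lra).
  assert (k2 <> 3*PI/2) by (intro; subst; pose proof Fa_3PI2; lra).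
  assert (k3 <> 2*PI) by (intro; subst; pose proof (Fs_neg2 (2*PI)); lra).
  assert (k3 <> 3*PI) by (intro; subst; pose proof Fs_3PI; lra).
  exists k1, k2, k3. split; [lra|split; [lra|split; [lra|split; [lra|split; [lra|split; [lra|split]]]]]].
  - intros k Hk Ek.
    destruct (Rle_lt_dec k PI). pose proof (Fa_pos1 k); lra.
    destruct (Rle_lt_dec (2*PI) k). pose proof (Fa_neg3 k); lra.
    destruct (Rtotal_order k k2) as [L|[L|L]]; auto.
    + pose proof (Fa_dec2 k k2); lra.
    + pose proof (Fa_dec2 k2 k); lra.
  - intros k Hk Ek.
    destruct (Rle_lt_dec k PI).
    + left. destruct (Rtotal_order k k1) as [L|[L|L]]; auto.
      * pose proof (Fs_dec1 k k1); lra.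
      * pose proof (Fs_dec1 k1 k); lra.
    + destruct (Rle_lt_dec k (2*PI)). pose proof (Fs_neg2 k); lra.
      right. destruct (Rtotal_order k k3) as [L|[L|L]]; auto.
      * pose proof (Fs_inc3 k k3); lra.
      * pose proof (Fs_inc3 k3 k); lra.
Qed.

End Roots.

Lemma b_bounds m eps k2 k3 : (1 <= m)%nat -> 0 < eps -> INR m * eps <= 1/100 ->
  3 * PI / 2 < k2 < 2 * PI -> 2 * PI < k3 < 3 * PI ->
  Fa m eps k2 = 0 -> Fs m eps k3 = 0 ->
  0 < sin (k2/2) /\ sin (k3/2) < 0 /\ sin (k2/2) < - sin (k3/2) / 2.
Proof.
  intros Hm He HMe Hk2 Hk3 E2 E3. pose proof PI_RGT_0. pose proof PI_4.
  pose proof (INR_m_ge1 m Hm) as HM.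
  unfold Fa, Fs in *. set (M := INR m) in *.
  assert (G : forall k, 0 < k <= 3 * PI ->
     0 < sin (k*eps/2) /\ 1/2 < cos (k*eps/2) /\ M * sin (k*eps/2) <= 6/100).
  { intros k Hk. destruct (al_props m eps Hm He HMe k) as (A0 & A1 & A2). lra.
    destruct (al_pos m eps Hm He HMe k Hk) as (S0 & C0 & _).
    split; auto. split.
    - rewrite <- cos_PI3. apply cos_decreasing_1; lra.
    - assert (sin (k*eps/2) < k*eps/2) by (apply sin_lt_x; assert (0 < k*eps) by nra; lra).
      fold M in A2. assert (M * sin (k*eps/2) <= M * (k*eps/2)) by (apply Rmult_le_compat_l; lra). lra. }
  destruct (G k2) as (Sa2 & Ca2 & Ma2). lra.
  destruct (G k3) as (Sa3 & Ca3 & Ma3). lra.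
  assert (s2p : 0 < sin (k2/2)) by (apply sin_gt_0; lra).
  assert (s3n : sin (k3/2) < 0) by (apply sin_lt_0; lra).
  assert (c2n : -1 <= cos (k2/2)) by (pose proof (COS_bound (k2/2)); lra).
  assert (c3n : cos (k3/2) < 0) by (apply cos_lt_0; lra).
  assert (s3b : -1 <= sin (k3/2)) by (pose proof (SIN_bound (k3/2)); lra).
  split; auto. split; auto.
  assert (B2 : M * sin (k2/2) * cos (k2*eps/2) <= sin (k2*eps/2)).
  { assert (- (sin (k2*eps/2) * cos (k2/2)) <= sin (k2*eps/2)) by nra. lra. }
  assert (B2' : sin (k2/2) * (1/2) <= sin (k2*eps/2)).
  { assert (sin (k2/2) * (1/2) <= sin (k2/2) * cos (k2*eps/2)) by (apply Rmult_le_compat_l; lra).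
    assert (sin (k2/2) * cos (k2*eps/2) <= M * sin (k2/2) * cos (k2*eps/2)).
    { assert (0 <= sin (k2/2) * cos (k2*eps/2)) by nra. nra. }
    lra. }
  assert (sin (k2*eps/2) <= M * sin (k2*eps/2)) by nra.
  assert (S2 : sin (k2/2) <= 12/100) by lra.
  assert (B3 : - cos (k3/2) * cos (k3*eps/2) <= 6/100).
  { assert (HH : - cos (k3/2) * cos (k3*eps/2) = M * sin (k3*eps/2) * (- sin (k3/2))) by lra.
    rewrite HH. assert (M * sin (k3*eps/2) * (- sin (k3/2)) <= M * sin (k3*eps/2) * 1).
    apply Rmult_le_compat_l. nra. lra. lra. }
  assert (C3 : - cos (k3/2) <= 12/100).
  { assert (- cos (k3/2) * (1/2) <= - cos (k3/2) * cos (k3*eps/2)) by (apply Rmult_le_compat_l; lra). lra. }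
  pose proof (sin2_cos2 (k3/2)) as P. unfold Rsqr in P.
  assert (cos (k3/2) * cos (k3/2) <= 144/10000) by nra.
  assert (- sin (k3/2) >= sin (k3/2) * sin (k3/2)) by nra.
  lra.
Qed.

Lemma sin_ratio k2 k3 y : 0 < k2 <= k3 -> 0 <= y -> k3 * y <= PI -> k2 * sin (k3 * y) <= k3 * sin (k2 * y).
Proof.
  intros Hk Hy Hky.
  destruct (MVT_gen (fun t => k3 * sin (k2 * t) - k2 * sin (k3 * t)) 0 y
              (fun t => k3 * k2 * cos (k2 * t) - k2 * k3 * cos (k3 * t))) as [c [Hc E]].
  - intros x _. auto_derive; auto. ring.
  - intros x _. apply derivable_continuous_pt, ex_derive_Reals_0. auto_derive; auto.
  - rewrite Rmin_left, Rmax_right in Hc by lra.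
    rewrite !Rmult_0_r, sin_0 in E.
    assert (cos (k3 * c) <= cos (k2 * c)).
    { pose proof PI_RGT_0. apply cos_decr_1; nra. }
    assert (0 <= k3 * k2 * cos (k2 * c) - k2 * k3 * cos (k3 * c)).
    { replace (k3 * k2 * cos (k2 * c) - k2 * k3 * cos (k3 * c)) with (k2 * k3 * (cos (k2*c) - cos (k3*c))) by ring.
      apply Rmult_le_pos; nra. }
    nra.
Qed.

Section Zeros.
Variables k2 k3 eps b : R.
Hypothesis Hk2 : 3 * PI / 2 < k2 < 2 * PI.
Hypothesis Hk3 : 2 * PI < k3 < 3 * PI.
Hypothesis He : 0 < eps.
Hypothesis Hke : k3 * eps < PI.
Hypothesis Hb : b * sin (k3/2) = - sin (k2/2).
Hypothesis Hb0 : 0 < b.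
Hypothesis Hb2 : b < 1/2.

Lemma zero_e1 x : 0 < x < 1/2 -> 0 < sin (k2 * x) + b * sin (k3 * x).
Proof.
  intros Hx. pose proof PI_RGT_0.
  destruct (Rle_lt_dec (k3 * x) PI).
  - assert (0 <= sin (k3 * x)) by (apply sin_ge_0; nra).
    assert (0 < sin (k2 * x)) by (apply sin_gt_0; nra). nra.
  - assert (sin (k2/2) < sin (k2 * x)) by (apply sin_decreasing_1; nra).
    assert (sin (k3/2) < sin (k3 * x)) by (apply sin_decreasing_1; nra).
    nra.
Qed.

Lemma zero_e2 x : 0 <= x < 1/2 -> - sin (k2 * (1/2 - x)) + b * sin (k3 * (1/2 - x)) < 0.
Proof.
  intros Hx. pose proof PI_RGT_0. set (y := 1/2 - x).
  assert (Hy : 0 < y <= 1/2) by (unfold y; lra).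
  assert (0 < sin (k2 * y)) by (apply sin_gt_0; nra).
  destruct (Rle_lt_dec (k3 * y) PI).
  - pose proof (sin_ratio k2 k3 y) as R. assert (k2 * sin (k3 * y) <= k3 * sin (k2 * y)) by (apply R; lra).
    assert (b * k3 < k2) by nra.
    assert (k2 * (b * sin (k3 * y)) < k2 * sin (k2 * y)) by nra.
    assert (b * sin (k3 * y) < sin (k2 * y)) by nra. lra.
  - assert (sin (k3 * y) < 0) by (apply sin_lt_0; nra). nra.
Qed.

Lemma zero_p x : 0 < x <= eps ->
  - (sin (k2/2) / sin (k2*eps/2)) * sin (k2 * (x - eps/2)) +
  b * ((sin (k3/2) / cos (k3*eps/2)) * cos (k3 * (x - eps/2))) < 0.
Proof.
  intros Hx. pose proof PI_RGT_0.
  assert (Ha2 : 0 < k2*eps/2 < PI/2) by (split; nra).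
  assert (Ha3 : 0 < k3*eps/2 < PI/2) by (split; nra).
  assert (Sa2 : 0 < sin (k2*eps/2)) by (apply sin_gt_0; lra).
  assert (Ca3 : 0 < cos (k3*eps/2)) by (apply cos_gt_0; lra).
  assert (s2p : 0 < sin (k2/2)) by (apply sin_gt_0; lra).
  assert (s3n : sin (k3/2) < 0) by (apply sin_lt_0; lra).
  set (A := - (sin (k2/2) / sin (k2*eps/2))). set (B := sin (k3/2) / cos (k3*eps/2)).
  assert (HA : A < 0). { unfold A. assert (0 < sin (k2/2) / sin (k2*eps/2)) by (apply Rdiv_lt_0_compat; lra). lra. }
  assert (HB : B < 0). { unfold B. apply Rdiv_neg_pos; lra. }
  set (t := x - eps/2).
  destruct (Rle_lt_dec t 0).
  - assert (sin (- (k2*eps/2)) < sin (k2 * t)).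
    { destruct (Req_dec x eps). unfold t in *; lra. apply sin_increasing_1; unfold t in *; nra. }
    assert (cos (k3*eps/2) < cos (k3 * t)).
    { rewrite (cos_sym (k3 * t)). apply cos_decreasing_1; unfold t in *; nra. }
    assert (A * sin (- (k2*eps/2)) = sin (k2/2)) by (unfold A; rewrite sin_neg; field; lra).
    assert (B * cos (k3*eps/2) = sin (k3/2)) by (unfold B; field; lra).
    assert (A * sin (k2 * t) < A * sin (- (k2*eps/2))) by nra.
    assert (b * B * cos (k3 * t) < b * B * cos (k3*eps/2)).
    { assert (b * B < 0) by nra. nra. }
    nra.
  - assert (0 < sin (k2 * t)) by (apply sin_gt_0; unfold t in *; nra).
    assert (0 < cos (k3 * t)) by (apply cos_gt_0; unfold t in *; nra).
    assert (A * sin (k2 * t) < 0) by nra.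
    assert (b * B < 0) by nra. nra.
Qed.

End Zeros.

Lemma gip_prop m eps lam u v c : is_eigenfunction m eps lam u ->
  (forall x, ge1 v x = c * ge1 u x) -> (forall x, ge2 v x = c * ge2 u x) ->
  (forall j x, (j < m)%nat -> gp v j x = c * gp u j x) ->
  gip m eps u v = c * gip m eps u u.
Proof.
  intros Hu E1 E2 Ep. destruct (eig_smooth _ _ _ _ Hu) as (S1 & S2 & Sp).
  assert (L : forall p a b, smooth p -> RInt (fun x => p x * (c * p x)) a b = c * RInt (fun x => p x * p x) a b).
  { intros p a b Hp. rewrite (RInt_extR _ (fun x => scal c (p x * p x))).
    rewrite (RInt_scal (V:=R_CompleteNormedModule)). reflexivity. apply exRInt_prod; auto.
    intros; unfold scal; simpl; unfold mult; simpl; ring. }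
  unfold gip.
  rewrite (RInt_extR (fun x => ge1 u x * ge1 v x) (fun x => ge1 u x * (c * ge1 u x))) by (intros; rewrite E1; auto).
  rewrite (RInt_extR (fun x => ge2 u x * ge2 v x) (fun x => ge2 u x * (c * ge2 u x))) by (intros; rewrite E2; auto).
  rewrite (sumR_ext m _ (fun j => c * RInt (fun x => gp u j x * gp u j x) 0 eps)).
  2: { intros j Hj. rewrite (RInt_extR _ (fun x => gp u j x * (c * gp u j x))) by (intros; rewrite Ep; auto).
       apply L; auto. }
  rewrite L, L, sumR_scal; auto. ring.
Qed.

Theorem lemma19 :
  forall m : nat, (1 <= m)%nat ->
  exists eps : R, 0 < eps /\
    forall (lam : nat -> R) (f : nat -> gfun),
      is_eigenbasis m eps lam f ->
      exists b : R, N_is_one m eps (gadd (f 1%nat) (gscale b (f 2%nat))).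
Proof.
  intros m Hm.
  pose proof (INR_m_ge1 m Hm) as HM.
  pose proof PI_RGT_0 as HPI. pose proof PI_4 as HPI4.
  set (eps := / (100 * INR m)).
  assert (He : 0 < eps) by (unfold eps; apply Rinv_0_lt_compat; lra).
  assert (HMe : INR m * eps <= 1/100) by (unfold eps; right; field; lra).
  assert (He1 : eps <= 1/100) by nra.
  exists eps. split; auto.
  intros lam f Hbasis.
  destruct (spectrum m eps Hm He HMe) as (k1 & k2 & k3 & Hk1 & Hk2 & Hk3 & E1 & E2 & E3 & U2 & U13).
  assert (Hkeps : forall k, 0 < k <= 3 * PI -> k * eps < PI).
  { intros k Hk. assert (k * eps <= 3 * PI * (1/100)) by nra. lra. }
  pose proof (Gsym_eig m eps k1 Hm ltac:(lra) ltac:(lra) He (Hkeps k1 ltac:(lra)) E1) as G1.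
  pose proof (Ganti_eig m eps k2 Hm ltac:(lra) ltac:(lra) He (Hkeps k2 ltac:(lra)) E2) as G2.
  pose proof (Gsym_eig m eps k3 Hm ltac:(lra) ltac:(lra) He (Hkeps k3 ltac:(lra)) E3) as G3.
  destruct (appears _ _ _ _ _ _ He Hbasis G1) as [i1 I1].
  destruct (appears _ _ _ _ _ _ He Hbasis G2) as [i2 I2].
  destruct (appears _ _ _ _ _ _ He Hbasis G3) as [i3 I3].
  pose proof Hbasis as (Hf & Hmono & Horth & _).
  assert (Ch : forall j, lam j <= k3 * k3 ->
     (lam j = k1 * k1 /\ exists a, a <> 0 /\ prop_eq m (f j) a (Gsym eps k1)) \/
     (lam j = k2 * k2 /\ exists a, a <> 0 /\ prop_eq m (f j) a (Ganti eps k2)) \/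
     (lam j = k3 * k3 /\ exists a, a <> 0 /\ prop_eq m (f j) a (Gsym eps k3))).
  { intros j Hj.
    assert (Hp : 0 < lam j) by (eapply eig_pos; eauto).
    assert (Hs : 0 < sqrt (lam j) <= 3 * PI).
    { split. apply sqrt_lt_R0; auto.
      assert (sqrt (lam j) <= sqrt (k3 * k3)) by (apply sqrt_le_1_alt; auto).
      rewrite sqrt_square in H by lra. lra. }
    assert (Hsq : sqrt (lam j) * sqrt (lam j) = lam j) by (apply sqrt_sqrt; lra).
    destruct (classify m eps (lam j) (f j) Hm He Hp (Hkeps _ Hs) (Hf j)) as [a [Ha [[F P]|[F P]]]].
    - right; left. pose proof (U2 _ Hs F) as Ek. rewrite Ek in P, Hsq. split; [lra|eauto].
    - destruct (U13 _ Hs F) as [Ek|Ek]; rewrite Ek in P, Hsq.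
      + left. split; [lra|eauto].
      + right; right. split; [lra|eauto]. }
  assert (Simp : forall i j a a' G, i <> j -> a <> 0 -> a' <> 0 ->
      prop_eq m (f i) a G -> prop_eq m (f j) a' G -> False).
  { intros i j a a' G Hij Ha Ha' (P1 & P2 & Pp) (Q1 & Q2 & Qp).
    assert (Z : gip m eps (f i) (f j) = 0) by (apply Horth; auto).
    rewrite (gip_prop m eps (lam i) (f i) (f j) (a'/a) (Hf i)) in Z.
    - pose proof (gip_pos _ _ _ _ He (Hf i)).
      apply Rmult_integral in Z. destruct Z as [Z|Z]; [|lra].
      assert (a' = 0). { apply (Rmult_eq_reg_r (/a)). rewrite Rmult_0_l. exact Z. apply Rinv_neq_0_compat; auto. }
      contradiction.
    - intro x. rewrite P1, Q1. field; auto.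
    - intro x. rewrite P2, Q2. field; auto.
    - intros jj x Hjj. rewrite Pp, Qp; auto. field; auto. }
  assert (Sq12 : k1 * k1 < k2 * k2) by nra.
  assert (Sq23 : k2 * k2 < k3 * k3) by nra.
  assert (Uniq : forall i j, lam i = lam j -> lam j <= k3 * k3 -> i = j).
  { intros i j Eij Hj.
    destruct (Nat.eq_dec i j) as [?|Hne]; auto. exfalso.
    assert (Hi : lam i <= k3 * k3) by lra.
    destruct (Ch i Hi) as [(Li & a & Ha & Pa)|[(Li & a & Ha & Pa)|(Li & a & Ha & Pa)]];
    destruct (Ch j Hj) as [(Lj & a' & Ha' & Pa')|[(Lj & a' & Ha' & Pa')|(Lj & a' & Ha' & Pa')]];
    try lra; exact (Simp i j a a' _ Hne Ha Ha' Pa Pa'). }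
  assert (L12 : (i1 < i2)%nat).
  { destruct (Nat.lt_ge_cases i1 i2); auto. assert (lam i2 <= lam i1) by (apply Hmono; auto). lra. }
  assert (L23 : (i2 < i3)%nat).
  { destruct (Nat.lt_ge_cases i2 i3); auto. assert (lam i3 <= lam i2) by (apply Hmono; auto). lra. }
  assert (Mem : forall j, (j <= 2)%nat -> j = i1 \/ j = i2 \/ j = i3).
  { intros j Hj. assert (lam j <= lam i3) by (apply Hmono; lia).
    destruct (Ch j ltac:(lra)) as [(Lj & _)|[(Lj & _)|(Lj & _)]].
    - left. apply Uniq; lra.
    - right; left. apply Uniq; lra.
    - right; right. apply Uniq; lra. }
  assert (i2 = 1%nat /\ i3 = 2%nat).
  { pose proof (Mem 0%nat ltac:(lia)). pose proof (Mem 1%nat ltac:(lia)). pose proof (Mem 2%nat ltac:(lia)). lia. }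
  destruct H as [-> ->].
  assert (F1 : exists a, a <> 0 /\ prop_eq m (f 1%nat) a (Ganti eps k2)).
  { destruct (Ch 1%nat ltac:(lra)) as [(L & _)|[(L & P)|(L & _)]]; try lra; auto. }
  assert (F2 : exists a, a <> 0 /\ prop_eq m (f 2%nat) a (Gsym eps k3)).
  { destruct (Ch 2%nat ltac:(lra)) as [(L & _)|[(L & _)|(L & P)]]; try lra; auto. }
  destruct F1 as (a2 & Ha2 & P1 & P2 & Pp).
  destruct F2 as (a3 & Ha3 & Q1 & Q2 & Qp).
  simpl in P1, P2, Pp, Q1, Q2, Qp.
  destruct (b_bounds m eps k2 k3 Hm He HMe Hk2 Hk3 E2 E3) as (s2p & s3n & sb).
  set (b0 := - sin (k2/2) / sin (k3/2)).
  assert (Hb : b0 * sin (k3/2) = - sin (k2/2)) by (unfold b0; field; lra).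
  assert (Hb0 : 0 < b0) by (unfold b0; apply Rdiv_neg_neg; lra).
  assert (Hb2 : b0 < 1/2).
  { unfold b0. apply (Rmult_lt_reg_r (- sin (k3/2))). lra.
    replace (- sin (k2 / 2) / sin (k3 / 2) * - sin (k3 / 2)) with (sin (k2/2)) by (field; lra). lra. }
  assert (Hke3 : k3 * eps < PI) by (apply Hkeps; lra).
  exists (a2 * b0 / a3).
  unfold N_is_one. exists PtV2. split.
  - split. simpl; auto. simpl. rewrite P1, Q1.
    replace (k2 * (1/2)) with (k2/2) by field. replace (k3 * (1/2)) with (k3/2) by field.
    field_simplify; auto. replace (a2 * sin (k2 / 2) + a2 * b0 * sin (k3 / 2)) with (a2 * (sin (k2/2) + b0 * sin (k3/2))) by ring.
    rewrite Hb. ring.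
  - intros p [Hv Hz]. destruct p as [x|x|j x| |]; simpl in Hv, Hz.
    + exfalso. rewrite P1, Q1 in Hz.
      assert (Hz' : a2 * (sin (k2 * x) + b0 * sin (k3 * x)) = 0) by (rewrite <- Hz; field; auto).
      assert (0 < sin (k2 * x) + b0 * sin (k3 * x)) by (eapply zero_e1; eauto).
      apply Rmult_integral in Hz'; destruct Hz'; [contradiction|lra].
    + exfalso. rewrite P2, Q2 in Hz.
      assert (Hz' : a2 * (- sin (k2 * (1/2 - x)) + b0 * sin (k3 * (1/2 - x))) = 0) by (rewrite <- Hz; field; auto).
      assert (- sin (k2 * (1/2 - x)) + b0 * sin (k3 * (1/2 - x)) < 0) by (eapply zero_e2; eauto; lra).
      apply Rmult_integral in Hz'; destruct Hz'; [contradiction|lra].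
    + exfalso. destruct Hv as [Hj Hx]. rewrite Pp, Qp in Hz by auto.
      assert (0 < sin (k2*eps/2)) by (apply sin_gt_0; nra).
      assert (0 < cos (k3*eps/2)) by (apply cos_gt_0; nra).
      assert (Hz' : a2 * (- (sin (k2/2) / sin (k2*eps/2)) * sin (k2 * (x - eps/2)) +
          b0 * ((sin (k3/2) / cos (k3*eps/2)) * cos (k3 * (x - eps/2)))) = 0)
        by (rewrite <- Hz; field; repeat split; auto; lra).
      assert (- (sin (k2/2) / sin (k2*eps/2)) * sin (k2 * (x - eps/2)) +
          b0 * ((sin (k3/2) / cos (k3*eps/2)) * cos (k3 * (x - eps/2))) < 0) by (eapply zero_p; eauto; lra).
      apply Rmult_integral in Hz'; destruct Hz'; [contradiction|lra].
    + reflexivity.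
    + exfalso. rewrite P2, Q2 in Hz.
      assert (Hz' : a2 * (- sin (k2 * (1/2 - 0)) + b0 * sin (k3 * (1/2 - 0))) = 0) by (etransitivity; [|exact Hz]; field; auto).
      assert (- sin (k2 * (1/2 - 0)) + b0 * sin (k3 * (1/2 - 0)) < 0) by (eapply zero_e2; eauto; lra).
      apply Rmult_integral in Hz'; destruct Hz'; [contradiction|lra].
Qed.
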